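(* Let $G$ be a hypo-unique domination graph. Then either $G=K_2$, or $G$ is a connected vertex domination-critical graph with $|V(G)|\geq 4$.
   Context: All graphs are finite, simple and undirected. A set $D\subseteq V(G)$ is dominating if every vertex of $G$ not in $D$ has a neighbor in $D$; $\gamma(G)$ is the minimum size of a dominating set, and a dominating set of size $\gamma(G)$ is a $\gamma$-set. A vertex $v$ is $\gamma$-critical if $\gamma(G-v)<\gamma(G)$; $G$ is a vertex domination-critical graph (vc-graph) if every vertex of $G$ is $\gamma$-critical. $G$ is a hypo-unique domination graph (hypo-$\mathcal{UD}$ graph) if $G$ has at least two $\gamma$-sets but for every $v\in V(G)$ the graph $G-v$ has exactly one $\gamma$-set. *)

(* Defs.v *)
From mathcomp Require Import all_boot.
Set Implicit Arguments. Unset Strict Implicit. Unset Printing Implicit Defensive.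

(* A finite simple graph: vertex type T : finType, adjacency e : rel T,
   assumed symmetric and irreflexive (as hypotheses of the theorem). *)
Section Dom.
Variables (T : finType) (e : rel T).

Definition dominates_in (S D : {set T}) : bool :=
  (D \subset S) && [forall x in S :\: D, exists y in D, e x y].

(* domination number of G[S]: minimum size of a dominating set
   (S itself always dominates G[S]). *)
Definition gamma_in (S : {set T}) : nat :=
  #|[arg min_(D < S | dominates_in S D) #|D|]|.

Definition gamma_set_in (S D : {set T}) : bool :=
  dominates_in S D && (#|D| == gamma_in S).

Definition gamma : nat := gamma_in setT.
Definition gamma_del (v : T) : nat := gamma_in [set~ v].

Definition vc_graph : Prop := forall v : T, gamma_del v < gamma.

Definition hypo_UD : Prop :=
  1 < #|[set D | gamma_set_in setT D]| /\
  forall v : T, #|[set D | gamma_set_in [set~ v] D]| = 1.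

Definition is_K2 : Prop := #|T| = 2 /\ forall x y : T, x != y -> e x y.

Definition connected_graph : Prop := forall x y : T, connect e x y.
End Dom.

(* Main.v *)
Require Import Defs.
From mathcomp Require Import all_boot.
Set Implicit Arguments. Unset Strict Implicit. Unset Printing Implicit Defensive.

Section Basics.
Variables (T : finType) (e : rel T).

Lemma domP (S D : {set T}) : reflect (D \subset S /\ forall x, x \in S -> x \notin D -> exists2 y, y \in D & e x y)
  (dominates_in e S D).
Proof.
apply: (iffP andP) => [[sub /forallP H]|[sub H]]; split => //.
- move=> x xS xD; have /implyP/(_ _)/existsP := H x.
  rewrite in_setD xS xD => /(_ isT) [y /andP[yD exy]]; by exists y.
- apply/forallP => x; apply/implyP; rewrite in_setD => /andP[xD xS].
  have [y yD exy] := H x xS xD; apply/existsP; exists y; by rewrite yD.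
Qed.

Lemma domTP (D : {set T}) : reflect (forall x, x \notin D -> exists2 y, y \in D & e x y) (dominates_in e setT D).
Proof.
apply: (iffP (domP _ _)) => [[_ H] x xD|H]; first exact: H.
by split; [apply: subsetT|move=> x _; apply: H].
Qed.

Lemma domVP (v : T) (D : {set T}) : reflect (v \notin D /\ forall x, x != v -> x \notin D -> exists2 y, y \in D & e x y)
  (dominates_in e [set~ v] D).
Proof.
apply: (iffP (domP _ _)) => [[sub H]|[vD H]]; split.
- apply/negP => vD; have := subsetP sub v vD; by rewrite in_setC1 eqxx.
- by move=> x xv; apply: H; rewrite in_setC1.
- apply/subsetP => x xD; rewrite in_setC1; apply/eqP => xv; by rewrite -xv xD in vD.
- by move=> x; rewrite in_setC1; apply: H.
Qed.

Lemma dom_self (S : {set T}) : dominates_in e S S.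
Proof. apply/domP; split => // x ->. by []. Qed.

Lemma gamma_min (S D : {set T}) : dominates_in e S D -> gamma_in e S <= #|D|.
Proof.
rewrite /gamma_in => HD; case: arg_minnP; first exact: dom_self.
by move=> D0 _ /(_ D HD).
Qed.

Lemma gamma_ex (S : {set T}) : exists2 D, dominates_in e S D & #|D| = gamma_in e S.
Proof.
rewrite /gamma_in; case: arg_minnP; first exact: dom_self.
move=> D0 HD0 _; by exists D0.
Qed.

Lemma gsetP (S D : {set T}) : reflect (dominates_in e S D /\ #|D| = gamma_in e S) (gamma_set_in e S D).
Proof. by apply: (iffP andP) => [[-> /eqP]|[-> ->]]. Qed.

Lemma gset_of (S D : {set T}) : dominates_in e S D -> #|D| <= gamma_in e S -> gamma_set_in e S D.
Proof.
move=> HD Hle; apply/gsetP; split => //; apply/eqP; rewrite eqn_leq Hle.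
exact: gamma_min.
Qed.

End Basics.


Section Hypo.
Variables (T : finType) (e : rel T).
Hypothesis e_sym : symmetric e.
Hypothesis e_irr : irreflexive e.
Hypothesis hyp : hypo_UD e.

Local Notation k := (gamma e).
Local Notation gv v := (gamma_del e v).
Local Notation gT D := (gamma_set_in e setT D).
Local Notation gV v D := (gamma_set_in e [set~ v] D).
Local Notation domT D := (dominates_in e setT D).
Local Notation domV v D := (dominates_in e [set~ v] D).

Lemma uniqV v D1 D2 : gV v D1 -> gV v D2 -> D1 = D2.
Proof.
case: hyp => _ /(_ v) H1 g1 g2.
have /card_le1_eqP H : #|[set D | gV v D]| <= 1 by rewrite H1.
by apply: H; rewrite inE.
Qed.

Lemma two_sets : exists D1 D2, [/\ gT D1, gT D2 & D1 != D2].
Proof.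
case: hyp => /card_gt1P [D1 [D2 [h1 h2 h3]]] _.
by exists D1, D2; rewrite !inE in h1 h2.
Qed.

Lemma gT_card D : gT D -> #|D| = k.
Proof. by case/gsetP. Qed.
Lemma gT_dom D : gT D -> domT D.
Proof. by case/gsetP. Qed.
Lemma gV_card v D : gV v D -> #|D| = gv v.
Proof. by case/gsetP. Qed.
Lemma gVc v D : gV v D -> #|D| = gamma_in e [set~ v].
Proof. by case/gsetP. Qed.
Lemma gV_dom v D : gV v D -> domV v D.
Proof. by case/gsetP. Qed.

Lemma exV v : exists D, gV v D.
Proof. have [D h1 h2] := gamma_ex e [set~ v]; exists D; exact/gsetP. Qed.

Lemma k_le D : domT D -> k <= #|D|.
Proof. exact: gamma_min. Qed.
Lemma gv_le v D : domV v D -> gv v <= #|D|.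
Proof. exact: gamma_min. Qed.

Lemma domT_V v D : domT D -> v \notin D -> domV v D.
Proof.
move=> /domTP H vD; apply/domVP; split => // x _; exact: H.
Qed.

Lemma avoidV v D : gT D -> v \notin D -> k <= gv v -> gV v D.
Proof.
move=> g vD nc; apply: gset_of; first exact: domT_V (gT_dom g) vD.
by rewrite (gT_card g).
Qed.

Lemma B2 v D1 D2 : k <= gv v -> gT D1 -> gT D2 -> v \notin D1 -> v \notin D2 -> D1 = D2.
Proof.
move=> nc g1 g2 n1 n2; apply: (@uniqV v); exact: avoidV.
Qed.

Lemma dom_add p y S : domV p S -> e p y -> y \in S -> domT S.
Proof.
move=> /domVP [pS H] epy yS; apply/domTP => x xS.
case: (eqVneq x p) => [->|xp]; first by exists y.
exact: H.
Qed.

Lemma dom_addU p y S : domV p S -> e p y -> domT (y |: S).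
Proof.
move=> /domVP [pS H] epy; apply/domTP => x; rewrite in_setU1 negb_or => /andP[xy xS].
case: (eqVneq x p) => [->|xp]; first by exists y; rewrite ?setU11.
have [z zS exz] := H x xp xS; exists z => //; by rewrite in_setU1 zS orbT.
Qed.

Lemma dom_self_add p S : domV p S -> domT (p |: S).
Proof.
move=> /domVP [pS H]; apply/domTP => x; rewrite in_setU1 negb_or => /andP[xp xS].
have [z zS exz] := H x xp xS; exists z => //; by rewrite in_setU1 zS orbT.
Qed.

Lemma crit_ext v S : gv v < k -> gV v S ->
  [/\ #|S|.+1 = k, gT (v |: S), v \notin S & forall y, e v y -> y \notin S].
Proof.
move=> cr g; have d := gV_dom g; have := d; case/domVP => vS _.
have c := gV_card g.
have dT := dom_self_add d.
have h1 : k <= #|S|.+1 by have := k_le dT; rewrite cardsU1 vS.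
have h2 : #|S|.+1 = k by apply/eqP; rewrite eqn_leq h1 andbT c.
split => //.
- apply: gset_of => //; by rewrite cardsU1 vS add1n h2.
- move=> y evy; apply/negP => yS.
  have := k_le (dom_add d evy yS); by rewrite leqNgt c cr.
Qed.

Lemma B1 x : exists2 D, gT D & x \in D.
Proof.
case: (boolP [exists D, gT D && (x \in D)]) => [/existsP [D /andP[g xD]]|/existsPn H].
  by exists D.
have [S gS] := exV x.
case: (ltnP (gv x) k) => [cr|nc].
  have [_ g2 _ _] := crit_ext cr gS.
  by have := H (x |: S); rewrite g2 setU11.
have [D1 [D2 [g1 g2 neq]]] := two_sets.
have n1 : x \notin D1 by have := H D1; rewrite g1.
have n2 : x \notin D2 by have := H D2; rewrite g2.
by rewrite (B2 nc g1 g2 n1 n2) eqxx in neq.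
Qed.

Definition epn (v : T) (E : {set T}) (p : T) :=
  [/\ p \notin E, e v p & forall y, y \in E -> e p y -> y = v].

Lemma epn_ex v E : k <= gv v -> gT E -> v \in E -> exists p, epn v E p.
Proof.
move=> nc g vE.
case: (boolP [exists p, [&& p \notin E, e v p & [forall y in E, e p y ==> (y == v)]]]).
  move/existsP => [p /and3P[pE evp /forallP H]]; exists p; split => // y yE epy.
  by apply/eqP; move: (H y); rewrite yE epy.
move/existsPn => H.
have d : domV v (E :\ v).
  apply/domVP; split; first by rewrite !inE eqxx.
  move=> x xv; rewrite in_setD1 xv /= => xE.
  case: (boolP [exists y in E :\ v, e x y]) => [/existsP [y /andP[yE exy]]|/existsPn H2].
    by exists y.
  have Hx := H x; rewrite xE /= in Hx.
  have /domTP H3 := gT_dom g.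
  have [y yE exy] := H3 x xE.
  have yv : y = v.
    apply/eqP; apply: contraNT (H2 y) => yv; by rewrite in_setD1 yv yE exy.
  exfalso; move: Hx; rewrite -yv e_sym exy /=; move/negP; apply; apply/forallP => z; apply/implyP => zE.
  apply/implyP => exz; apply/eqP; apply/eqP; apply: contraNT (H2 z) => zv.
  by rewrite in_setD1 -yv zv zE exz.
have h := gv_le d; have c := gT_card g.
move: c; rewrite (cardsD1 v E) vE add1n => c.
have := leq_trans nc h; by rewrite -c ltnn.
Qed.


Lemma card_swap1 (A : {set T}) u y : u \in A -> #|y |: (A :\ u)| <= #|A|.
Proof.
move=> uA; rewrite cardsU1 (cardsD1 u A) uA.
by case: (y \notin A :\ u).
Qed.

Lemma card_swap2 (A : {set T}) a b x : a \in A -> b \in A -> a != b ->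
  #|x |: (A :\ a :\ b)| < #|A|.
Proof.
move=> aA bA ab; rewrite cardsU1 (cardsD1 a A) aA (cardsD1 b (A :\ a)).
have -> : b \in A :\ a by rewrite in_setD1 eq_sym ab bA.
by case: (x \notin _); rewrite !add1n.
Qed.

Lemma gT_addU p y S : gV p S -> gv p < k -> e p y -> y \notin S -> gT (y |: S).
Proof.
move=> g cr epy yS; have [c _ _ _] := crit_ext cr g.
apply: gset_of; first exact: dom_addU (gV_dom g) epy.
by rewrite cardsU1 yS add1n c.
Qed.

Lemma CL0 x p S : k <= gv x -> e x p -> gv p < k -> gV p S ->
  [/\ x \notin S, gV x (p |: S), gT (p |: S), gT (x |: S) & forall y, e p y -> y = x].
Proof.
move=> nc exp cr g; have [c gpS pS nb] := crit_ext cr g.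
have xS : x \notin S by apply: nb; rewrite e_sym.
have xp : x != p by apply: contraTneq exp => ->; rewrite e_irr.
have gpx : gV x (p |: S) by apply: avoidV => //; rewrite in_setU1 negb_or xp.
have gxS : gT (x |: S) by apply: (gT_addU g cr) => //; rewrite e_sym.
split => // y epy; apply/eqP; apply/negP => /negP yx.
have yS : y \notin S by apply: nb.
have gy : gV x (y |: S).
  apply: avoidV => //; first by apply: (gT_addU g cr).
  by rewrite in_setU1 negb_or eq_sym yx.
have := uniqV gy gpx => /setP /(_ y); rewrite setU11 in_setU1 (negbTE yS) orbF => /esym/eqP yp.
by move: epy; rewrite yp e_irr.
Qed.

Lemma TwoCrit u q1 q2 : k <= gv u -> e u q1 -> e u q2 -> q1 != q2 ->
  gv q1 < k -> gv q2 < k -> False.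
Proof.
move=> nc e1 e2 q12 c1 c2.
have [S1 g1] := exV q1; have [S2 g2] := exV q2.
have [_ h1 _ _ n1] := CL0 nc e1 c1 g1.
have [_ h2 _ _ n2] := CL0 nc e2 c2 g2.
have eqR := uniqV h1 h2.
have [cc _ q1S1 _] := crit_ext c1 g1.
set R := q1 |: S1.
have q1R : q1 \in R by rewrite setU11.
have q2R : q2 \in R by rewrite /R eqR setU11.
have /domVP [uR dR] := gV_dom h1.
have d : domT (u |: (R :\ q1 :\ q2)).
  apply/domTP => z zR.
  case: (eqVneq z q1) => [->|zq1]; first by exists u; rewrite ?setU11 // e_sym.
  case: (eqVneq z q2) => [->|zq2]; first by exists u; rewrite ?setU11 // e_sym.
  have zu : z != u by apply: contraNneq zR => ->; rewrite setU11.
  have zR' : z \notin R by apply: contraNN zR => zR; rewrite in_setU1 !in_setD1 zq1 zq2 zR orbT.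
  have [t tR ezt] := dR z zu zR'.
  exists t => //; rewrite in_setU1 !in_setD1 tR !andbT.
  have tq1 : t != q1.
    apply: contra_neq zu => tq; apply: n1; by rewrite -tq e_sym.
  have tq2 : t != q2.
    apply: contra_neq zu => tq; apply: n2; by rewrite -tq e_sym.
  by rewrite tq1 tq2 orbT.
have := k_le d; have := card_swap2 u q1R q2R q12.
have cR : #|R| = k by rewrite /R cardsU1 q1S1 add1n cc.
rewrite cR => h1' h2'.
by have := leq_ltn_trans h2' h1'; rewrite ltnn.
Qed.

Hypothesis conn : connected_graph e.
Hypothesis n3 : 3 <= #|T|.

Lemma third (a b : T) : exists z, (z != a) && (z != b).
Proof.
apply/existsP; apply: contraTT n3 => /existsPn H.
have sub : [set: T] \subset [set a; b].
  apply/subsetP => z _; have := H z; rewrite negb_and !negbK.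
  by case/orP => /eqP ->; rewrite !inE eqxx ?orbT.
have := subset_leq_card sub; rewrite cardsT cards2 -ltnNge => h.
by apply: (leq_ltn_trans h); case: (a != b).
Qed.

Lemma nbr_other x p : e x p -> (forall y, e p y -> y = x) -> exists u, e x u /\ u != p.
Proof.
move=> exp np.
case: (boolP [exists u, e x u && (u != p)]) => [/existsP [u /andP[h1 h2]]|/existsPn H].
  by exists u.
have nx : forall y, e x y -> y = p.
  move=> y exy; apply/eqP; have := H y; by rewrite exy /= negbK.
have H2 : forall a b, e a b -> a \in [set x; p] -> b \in [set x; p].
  move=> a b eab; case/set2P => H1; rewrite H1 in eab;
    [rewrite (nx _ eab) | rewrite (np _ eab)]; by rewrite !inE eqxx ?orbT.
have cl : closed e [set x; p].
  move=> a b eab; apply/idP/idP; first exact: H2.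
  by apply: H2; rewrite e_sym.
have [z /andP[zx zp]] := third x p.
have := closed_connect cl (conn x z); rewrite !inE eqxx /= => /esym/orP[] /eqP zz.
- by rewrite zz eqxx in zx.
- by rewrite zz eqxx in zp.
Qed.

Lemma CaseI x p : k <= gv x -> e x p -> gv p < k -> False.
Proof.
move=> nc exp cr.
have [S gS] := exV p.
have [xS gpx gTp gTx np] := CL0 nc exp cr gS.
have [c _ pS nbp] := crit_ext cr gS.
have xp : x != p by apply: contraTneq exp => ->; rewrite e_irr.
have crit_f : forall w, w \notin S -> w != p -> w != x -> gv w < k.
  move=> w wS wp wx; rewrite ltnNge; apply/negP => ncw.
  have := B2 ncw gTp gTx.
  rewrite !in_setU1 !negb_or wp wS wx => /(_ isT isT) /setP /(_ x).
  by rewrite !in_setU1 eqxx (negbTE xS) (negbTE xp).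
have [u [exu up]] := nbr_other exp np.
have ux : u != x by apply: contraTneq exu => ->; rewrite e_irr.
have ncu : k <= gv u.
  rewrite leqNgt; apply/negP => cru.
  have [Su gSu] := exV u.
  have [_ _ uSu nbu] := crit_ext cru gSu.
  have xSu : x \notin Su by apply: nbu; rewrite e_sym.
  have /domVP [_ dSu] := gV_dom gSu.
  have pSu : p \in Su.
    apply: contraT => pSu; have pu : p != u by rewrite eq_sym.
    have [t tSu ept] := dSu p pu pSu.
    by move: tSu; rewrite (np t ept) (negbTE xSu).
  have gR : gV u (x |: (Su :\ p)).
    apply: gset_of; last by rewrite -(gVc gSu); apply: card_swap1.
    apply/domVP; split.
      by rewrite in_setU1 in_setD1 negb_or ux (negbTE uSu) andbF.
    move=> z zu; rewrite in_setU1 in_setD1 negb_or => /andP[zx zS].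
    case: (eqVneq z p) => [->|zp]; first by exists x; rewrite ?setU11 // e_sym.
    have zSu : z \notin Su by move: zS; rewrite zp.
    have [t tSu ezt] := dSu z zu zSu.
    exists t => //; rewrite in_setU1 in_setD1 tSu andbT.
    apply/orP; right; apply: contra_neq zx => tp; apply: np.
    by rewrite -tp e_sym.
  have := uniqV gR gSu => /setP /(_ x); rewrite setU11 => /esym.
  by rewrite (negbTE xSu).
have uS : u \in S.
  apply: contraT => uS; have := crit_f u uS up ux; by rewrite ltnNge ncu.
have [y [euy yx]] : exists y, e u y /\ y != x.
  case: (boolP [exists y, e u y && (y != x)]) => [/existsP [y /andP[h1 h2]]|/existsPn H].
    by exists y.
  have nu : forall y, e u y -> y = x.
    move=> y euy; apply/eqP; have := H y; by rewrite euy /= negbK.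
  exfalso.
  have d : domT (x |: (S :\ u)).
    apply/domTP => z; rewrite in_setU1 in_setD1 negb_or => /andP[zx zS].
    case: (eqVneq z u) => [->|zu]; first by exists x; rewrite ?setU11 // e_sym.
    case: (eqVneq z p) => [->|zp]; first by exists x; rewrite ?setU11 // e_sym.
    have zS' : z \notin S by move: zS; rewrite zu.
    have /domVP [_ dS] := gV_dom gS.
    have [t tS ezt] := dS z zp zS'.
    exists t => //; rewrite in_setU1 in_setD1 tS andbT.
    apply/orP; right; apply: contra_neq zx => tu; apply: nu.
    by rewrite -tu e_sym.
  have := k_le d; have := card_swap1 x uS; rewrite -c => h1 h2.
  by have := leq_trans h2 h1; rewrite ltnn.
(* the set Q of private neighbours of u w.r.t. p |: S in G - x *)
have uT0 : u \in (p |: S) by rewrite in_setU1 uS orbT.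
set Q := [set y | [&& y \notin (p |: S), y != x, e u y & [forall t in (p |: S), e y t ==> (t == u)]]].
case: (ltnP 1 #|Q|) => [/card_gt1P [q1 [q2 [q1Q q2Q q12]]]|Qle].
  move: q1Q q2Q; rewrite !inE => /and4P[q1T q1x eq1 _] /and4P[q2T q2x eq2 _].
  move: q1T q2T; rewrite !negb_or => /andP[q1p q1S] /andP[q2p q2S].
  exact: (TwoCrit ncu eq1 eq2 q12 (crit_f _ q1S q1p q1x) (crit_f _ q2S q2p q2x)).
have [y0 [euy0 y0x Qy0]] : exists y0, [/\ e u y0, y0 != x & forall z, z \in Q -> z = y0].
  case: (pickP (mem Q)) => [q qQ|Q0].
    exists q; move: (qQ); rewrite /Q !inE => /and4P[_ qx euq _]; split => // z zQ.
    by have /card_le1_eqP := Qle; apply.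
  by exists y; split => // z zQ; move: (Q0 z) => /=; rewrite zQ.
have gR : gV x (y0 |: ((p |: S) :\ u)).
  apply: gset_of; last by rewrite -(gVc gpx); apply: card_swap1.
  have /domVP [xT0 dT0] := gV_dom gpx.
  apply/domVP; split.
    by rewrite in_setU1 in_setD1 negb_or eq_sym y0x (negbTE xT0) andbF.
  move=> z zx; rewrite in_setU1 in_setD1 negb_or => /andP[zy0 zT].
  case: (eqVneq z u) => [->|zu]; first by exists y0; rewrite ?setU11.
  have zT' : z \notin (p |: S) by move: zT; rewrite zu.
  case: (boolP [exists t in (p |: S) :\ u, e z t]) => [/existsP [t /andP[tT ezt]]|/existsPn H].
    by exists t => //; rewrite in_setU1 tT orbT.
  have [t tT ezt] := dT0 z zx zT'.
  have tu : t = u.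
    apply/eqP; apply: contraNT (H t) => tu; by rewrite in_setD1 tu tT ezt.
  have zQ : z \in Q.
    rewrite /Q inE zT' zx -tu e_sym ezt /=; apply/forallP => t'; apply/implyP => t'T.
    apply/implyP => ezt'; apply: contraNT (H t') => t'u.
    by rewrite in_setD1 -tu t'u t'T ezt'.
  by rewrite (Qy0 z zQ) eqxx in zy0.
have := uniqV gR gpx => /setP /(_ u); rewrite uT0 in_setU1 in_setD1 eqxx /= orbF => /eqP uy0.
by move: euy0; rewrite -uy0 e_irr.
Qed.

Lemma NC_nbr x p : k <= gv x -> e x p -> k <= gv p.
Proof.
move=> nc exp; rewrite leqNgt; apply/negP => cr; exact: (CaseI nc exp cr).
Qed.

Lemma MainStep v E p : k <= gv v -> gT E -> v \in E -> epn v E p ->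
  exists F, [/\ gT F, p \in F, v \notin F & forall y, e p y -> y = v].
Proof.
move=> ncv gE vE [pE evp pp].
have ncp := NC_nbr ncv evp.
have [F gF pF] := B1 p.
have epnF : forall z, epn p F z -> z = v.
  move=> z [zF epz zz].
  have ncz := NC_nbr ncp epz.
  have zE : z \in E.
    apply: contraT => zE; have := B2 ncz gE gF zE zF => EF.
    by rewrite EF pF in pE.
  exact: pp.
have [q hq] := epn_ex ncp gF pF.
have vF : v \notin F by have := epnF q hq; case: hq => qF _ _ <-.
have gVF := avoidV gF vF ncv.
exists F; split => // y epy; apply/eqP; apply/negP => /negP yv.
have gR : gV v (y |: (F :\ p)).
  apply: gset_of; last by rewrite -(gVc gVF); apply: card_swap1.
  apply/domVP; split.
    by rewrite in_setU1 in_setD1 negb_or eq_sym yv (negbTE vF) andbF.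
  move=> z zv; rewrite in_setU1 in_setD1 negb_or => /andP[zy zF].
  case: (eqVneq z p) => [->|zp]; first by exists y; rewrite ?setU11.
  have zF' : z \notin F by move: zF; rewrite zp.
  case: (boolP [exists t in F :\ p, e z t]) => [/existsP [t /andP[tF ezt]]|/existsPn H].
    by exists t => //; rewrite in_setU1 tF orbT.
  have /domTP dF := gT_dom gF.
  have [t tF ezt] := dF z zF'.
  have tp : t = p.
    apply/eqP; apply: contraNT (H t) => tp; by rewrite in_setD1 tp tF ezt.
  have : epn p F z.
    split => //; first by rewrite -tp e_sym.
    move=> t' t'F ezt'; apply/eqP; apply: contraNT (H t') => t'p.
    by rewrite in_setD1 t'p t'F ezt'.
  by move/epnF => zv'; rewrite zv' eqxx in zv.
have := uniqV gR gVF => /setP /(_ p); rewrite pF in_setU1 in_setD1 eqxx /= orbF => /eqP py.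
by move: epy; rewrite py e_irr.
Qed.

Lemma vc v : gv v < k.
Proof.
rewrite ltnNge; apply/negP => ncv.
have [E gE vE] := B1 v.
have [p hp] := epn_ex ncv gE vE.
have [F [gF pF vF np]] := MainStep ncv gE vE hp.
case: hp => pE evp pp.
have ncp := NC_nbr ncv evp.
have [p' [hp' p'p]] : exists p', epn v E p' /\ p' != p.
  case: (boolP [exists p', [&& p' \notin E, e v p', [forall y in E, e p' y ==> (y == v)] & p' != p]]).
    move/existsP => [p' /and4P[p'E evp' /forallP H p'p]]; exists p'; split => //.
    split => // y yE ep'y; apply/eqP; by move: (H y); rewrite yE ep'y.
  move/existsPn => H; exfalso.
  have [u [evu up]] := nbr_other evp np.
  have gEp := avoidV gE pE ncp.
  have gR : gV p (u |: (E :\ v)).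
    apply: gset_of; last by rewrite -(gVc gEp); apply: card_swap1.
    apply/domVP; split.
      by rewrite in_setU1 in_setD1 negb_or eq_sym up (negbTE pE) andbF.
    move=> z zp; rewrite in_setU1 in_setD1 negb_or => /andP[zu zE].
    case: (eqVneq z v) => [->|zv]; first by exists u; rewrite ?setU11.
    have zE' : z \notin E by move: zE; rewrite zv.
    case: (boolP [exists t in E :\ v, e z t]) => [/existsP [t /andP[tE ezt]]|/existsPn H2].
      by exists t => //; rewrite in_setU1 tE orbT.
    have /domTP dE := gT_dom gE.
    have [t tE ezt] := dE z zE'.
    have tv : t = v.
      apply/eqP; apply: contraNT (H2 t) => tv; by rewrite in_setD1 tv tE ezt.
    exfalso; move: (H z); rewrite zE' zp andbT /= -tv e_sym ezt /=.
    move/negP; apply; apply/forallP => t'; apply/implyP => t'E; apply/implyP => ezt'.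
    apply: contraNT (H2 t') => t'v; by rewrite in_setD1 -tv t'v t'E ezt'.
  have := uniqV gR gEp => /setP /(_ v); rewrite vE in_setU1 in_setD1 eqxx /= orbF => /eqP vu.
  by move: evu; rewrite -vu e_irr.
have [F' [gF' p'F' vF' np']] := MainStep ncv gE vE hp'.
have FF := B2 ncv gF gF' vF vF'; rewrite -FF in p'F'.
have d : domT (v |: (F :\ p :\ p')).
  apply/domTP => z zR.
  case: (eqVneq z p) => [->|zp]; first by exists v; rewrite ?setU11 // e_sym.
  case: (eqVneq z p') => [->|zp']; first by exists v; rewrite ?setU11 // e_sym; case: hp'.
  have zv : z != v by apply: contraNneq zR => ->; rewrite setU11.
  have zF : z \notin F by apply: contraNN zR => zF; rewrite in_setU1 !in_setD1 zp zp' zF orbT.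
  have /domTP dF := gT_dom gF.
  have [t tF ezt] := dF z zF.
  exists t => //; rewrite in_setU1 !in_setD1 tF !andbT.
  have tp : t != p by apply: contra_neq zv => tq; apply: np; rewrite -tq e_sym.
  have tp' : t != p' by apply: contra_neq zv => tq; apply: np'; rewrite -tq e_sym.
  by rewrite tp tp' orbT.
have pp' : p != p' by rewrite eq_sym.
have := k_le d; have := card_swap2 v pF p'F' pp'.
by rewrite (gT_card gF) => h1 h2; have := leq_ltn_trans h2 h1; rewrite ltnn.
Qed.


Lemma cardU_le (A B : {set T}) : #|A :|: B| <= #|A| + #|B|.
Proof. by rewrite cardsU leq_subr. Qed.

Lemma comp_eq (C : {set T}) b D S :
  (forall a c, e a c -> a \in C -> c \in C) -> b \notin C -> gT D -> gV b S ->
  D :&: C = S :&: C.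
Proof.
move=> clC bC gD gS.
have clN : forall a c, e a c -> a \notin C -> c \notin C.
  move=> a c eac; apply: contraNN => cC; apply: (clC c) => //; by rewrite e_sym.
have /domTP dD := gT_dom gD.
have /domVP [bS dS] := gV_dom gS.
have dS' : domV b ((S :\: C) :|: (D :&: C)).
  apply/domVP; split.
    by rewrite !inE (negbTE bS) (negbTE bC) !andbF.
  move=> z zb; rewrite !inE negb_or => /andP[h1 h2].
  case zC: (z \in C).
    move: h2; rewrite zC andbT => zD; have [t tD ezt] := dD z zD.
    by exists t => //; rewrite !inE tD (clC z t ezt zC) orbT.
  move: h1; rewrite zC /= => zS; have [t tS ezt] := dS z zb zS.
  exists t => //; rewrite !inE tS andbT.
  by rewrite (clN z t ezt) ?zC.
have dD' : domT ((D :\: C) :|: (S :&: C)).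
  apply/domTP => z; rewrite !inE negb_or => /andP[h1 h2].
  case zC: (z \in C).
    move: h2; rewrite zC andbT => zS.
    have zb : z != b by apply: contraTneq zC => ->; rewrite (negbTE bC).
    have [t tS ezt] := dS z zb zS.
    by exists t => //; rewrite !inE tS (clC z t ezt zC) orbT.
  move: h1; rewrite zC /= => zD; have [t tD ezt] := dD z zD.
  exists t => //; rewrite !inE tD andbT.
  by rewrite (clN z t ezt) ?zC.
have cD := gT_card gD; have cS := gVc gS.
have e1 := cardsID C D; have e2 := cardsID C S.
have l1 := leq_trans (k_le dD') (cardU_le _ _).
have l2 := leq_trans (gamma_min dS') (cardU_le _ _).
have le1 : #|D :&: C| <= #|S :&: C|.
  by rewrite -(leq_add2r #|D :\: C|) e1 cD addnC.
have le2 : #|S :&: C| <= #|D :&: C|.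
  by rewrite -(leq_add2r #|S :\: C|) e2 cS addnC.
have gS' : gV b ((S :\: C) :|: (D :&: C)).
  apply: gset_of => //; apply: leq_trans (cardU_le _ _) _.
  by rewrite -cS -e2 addnC leq_add2r.
have EQ := uniqV gS' gS.
apply/setP => x; rewrite !inE; case xC: (x \in C); rewrite ?andbF //.
by move/setP: EQ => /(_ x); rewrite !inE xC /= !andbT => ->.
Qed.

Lemma connectedG : connected_graph e.
Proof.
move=> x y; apply/idPn => nxy.
set C := [set z | connect e x z].
have clC : forall a c, e a c -> a \in C -> c \in C.
  move=> a c eac; rewrite !inE => xa; apply: connect_trans xa _; exact: connect1.
have clN : forall a c, e a c -> a \in ~: C -> c \in ~: C.
  move=> a c eac; rewrite !in_setC; apply: contraNN => cC; apply: (clC c) => //; by rewrite e_sym.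
have yC : y \notin C by rewrite inE.
have xC : x \notin ~: C by rewrite in_setC inE negbK connect0.
have [D1 [D2 [g1 g2 neq]]] := two_sets.
have [Sy gy] := exV y; have [Sx gx] := exV x.
have h1 := comp_eq clC yC g1 gy; have h2 := comp_eq clC yC g2 gy.
have h3 := comp_eq clN xC g1 gx; have h4 := comp_eq clN xC g2 gx.
move/negP: neq; apply; apply/eqP/setP => z.
case zC: (connect e x z).
  by move/setP: h1 => /(_ z); move/setP: h2 => /(_ z); rewrite !inE zC !andbT => -> ->.
by move/setP: h3 => /(_ z); move/setP: h4 => /(_ z); rewrite !inE zC !andbT => -> ->.
Qed.

Lemma small_or_K2 : is_K2 e \/ 3 <= #|T|.
Proof.
case: (ltnP 2 #|T|) => [h|h]; first by right.
left.
case: (boolP [exists a, exists b, e a b]) => [/existsP [a /existsP [b eab]]|/existsPn H].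
  have ab : a != b by apply: contraTneq eab => ->; rewrite e_irr.
  have inab : forall z, z \in [set a; b].
    move=> z; apply: contraT => zn.
    have : #|z |: [set a; b]| <= #|T| by apply: max_card.
    rewrite cardsU1 zn cards2 ab add1n => h3.
    by have := leq_trans h3 h.
  split.
    apply/eqP; rewrite eqn_leq h /=.
    have : #|[set a; b]| <= #|T| by apply: max_card.
    by rewrite cards2 ab.
  move=> x y xy.
  move: xy (inab x) (inab y) => xy /set2P[] xa /set2P[] yb; rewrite xa yb in xy *;
    rewrite ?eqxx // in xy; by rewrite e_sym.
exfalso.
have noe : forall a b, e a b = false.
  move=> a b; apply/negP => eab; have := H a; move/existsPn => /(_ b); by rewrite eab.
have [D1 [D2 [g1 g2 neq]]] := two_sets.
have full : forall D, gT D -> D = setT.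
  move=> D g; apply/setP => z; rewrite inE; apply: contraT => zD.
  have /domTP dD := gT_dom g.
  by have [t _] := dD z zD; rewrite noe.
by rewrite (full _ g1) (full _ g2) eqxx in neq.
Qed.

Lemma four : 4 <= #|T|.
Proof.
have [v _] : exists v : T, true.
  have : 0 < #|T| by apply: leq_trans n3.
  by case/card_gt0P => v _; exists v.
have cr := vc v.
have k2 : 2 <= k.
  rewrite ltnNge; apply/negP => k1.
  have g0 : gv v = 0 by apply/eqP; rewrite -leqn0 -ltnS; exact: leq_trans cr k1.
  have [D dD cD] := gamma_ex e [set~ v].
  have D0 : D = set0 by apply/eqP; rewrite -cards_eq0 cD -/(gamma_del e v) g0.
  have [z /andP[zv _]] := third v v.
  have /domVP [_ dV] := dD.
  have zD : z \notin D by rewrite D0 inE.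
  by have [t] := dV z zv zD; rewrite D0 inE.
have [D dD cD] := gamma_ex e setT.
have hasnb : forall x, exists y, e x y.
  move=> x; case: (boolP [exists y, e x y]) => [/existsP [y h]|/existsPn H]; first by exists y.
  have [z /andP[zx _]] := third x x.
  have cl : closed e [set x].
    move=> a c eac; rewrite !inE.
    case: (eqVneq a x) => [ax|ax]; first by move: eac; rewrite ax => exc; have := H c; rewrite exc.
    case: (eqVneq c x) => [cx|//]; move: eac; rewrite cx e_sym => exa; by have := H a; rewrite exa.
  have := closed_connect cl (conn x z); rewrite !inE eqxx => /esym/eqP zx'.
  by rewrite zx' eqxx in zx.
have dC : domT (~: D).
  apply/domTP => x; rewrite in_setC negbK => xD.
  case: (boolP [exists y, (y \notin D) && e x y]) => [/existsP [y /andP[yD exy]]|/existsPn H].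
    by exists y; rewrite ?in_setC.
  exfalso.
  have nD : forall y, e x y -> y \in D.
    move=> y exy; have := H y; by rewrite exy andbT negbK.
  have [w exw] := hasnb x.
  have wx : w != x by apply: contraTneq exw => ->; rewrite e_irr.
  have dD' : domT (D :\ x).
    apply/domTP => z; rewrite in_setD1 negb_and negbK => /orP[/eqP ->|zD].
      by exists w; rewrite ?in_setD1 ?wx ?nD.
    have /domTP dd := dD.
    have [t tD ezt] := dd z zD.
    exists t => //; rewrite in_setD1 tD andbT.
    apply: contraNneq zD => tx; apply: nD; by rewrite -tx e_sym.
  have := gamma_min dD'; rewrite -cD (cardsD1 x D) xD add1n.
  by rewrite ltnn.
have := gamma_min dC; rewrite -cD => hC.
have := cardsC D; rewrite cD => hT.
rewrite -hT; apply: leq_trans (leq_add k2 hC).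
by rewrite cD; apply: (leq_add (leqnn 2) k2).
Qed.

End Hypo.

Theorem theorem3p1 (T : finType) (e : rel T)
  (e_sym : symmetric e) (e_irr : irreflexive e) :
  hypo_UD e ->
  is_K2 e \/ (connected_graph e /\ vc_graph e /\ 4 <= #|T|).
Proof.
move=> hyp.
case: (small_or_K2 e_sym e_irr hyp) => [K|n3]; first by left.
right.
have conn := connectedG e_sym hyp.
split => //; split; first by move=> v; exact: (vc e_sym e_irr hyp conn n3).
exact: (four e_sym e_irr hyp conn n3).
Qed.
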